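(* Let $\mathfrak{g}_i$, $i=1,\dots,r$, be a family of metric Lie algebras sharing the same underlying euclidean vector space $W$ (each bracket $[-,-]_i$ being invariant with respect to the euclidean inner product of $W$), and let $[-,-]_i$ denote the Lie bracket of $\mathfrak{g}_i$. Suppose that for all $x,y,z\in W$ and all $i,j$, $$[x, [y,z]_i]_j = [[x,y]_j,z]_i + [y,[x,z]_j]_i \qquad\text{and}\qquad [[x,y]_i,z]_j = [[x,y]_j,z]_i.$$ Then there is an orthogonal decomposition $W = W_0 \oplus \bigoplus_{\alpha =1}^N W_\alpha$ such that $$[x,y]_i = \begin{cases} 0 & \text{if } x,y\in W_0,\\ \kappa_i^\alpha [x,y] & \text{if } x,y \in W_\alpha,\end{cases}$$ for some $\kappa_i^\alpha \in \mathbb{R}$, where $[-,-]$ are the Lie brackets of a semisimple Lie algebra $\mathfrak{g}$ with underlying vector space $\bigoplus_{\alpha =1}^N W_\alpha$.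
   Context: A metric Lie algebra here is a Lie algebra structure on $W$ for which the given inner product $\langle-,-\rangle$ is ad-invariant: $\langle [x,y]_i,z\rangle = \langle x,[y,z]_i\rangle$. *)

(* Defs.v *)
(* Euclidean space W = 'rV[R]_n with the standard inner product. *)
From HB Require Import structures.
From mathcomp Require Import all_boot all_order all_algebra.
From mathcomp Require Import reals.
Set Implicit Arguments. Unset Strict Implicit. Unset Printing Implicit Defensive.
Import Order.TTheory GRing.Theory Num.Theory.
Local Open Scope ring_scope.

Section Defs.
Variables (R : realType) (n : nat).
Notation vec := 'rV[R]_n.

Definition dot (u v : vec) : R := \sum_(k < n) u 0 k * v 0 k.

Definition is_lie_bracket (b : vec -> vec -> vec) : Prop :=
  (forall a x y z, b (a *: x + y) z = a *: b x z + b y z) /\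
  (forall a x y z, b x (a *: y + z) = a *: b x y + b x z) /\
  (forall x, b x x = 0) /\
  (forall x y z, b x (b y z) + b y (b z x) + b z (b x y) = 0).

Definition is_metric (b : vec -> vec -> vec) : Prop :=
  forall x y z, dot (b x y) z = dot x (b y z).

(* Subspaces of W are represented by row spaces of square matrices (mxalgebra). *)
Definition lie_on (U : 'M[R]_n) (b : vec -> vec -> vec) : Prop :=
  (forall x y, (x <= U)%MS -> (y <= U)%MS -> (b x y <= U)%MS) /\
  (forall a x y z, (x <= U)%MS -> (y <= U)%MS -> (z <= U)%MS ->
     b (a *: x + y) z = a *: b x z + b y z) /\
  (forall a x y z, (x <= U)%MS -> (y <= U)%MS -> (z <= U)%MS ->
     b x (a *: y + z) = a *: b x y + b x z) /\
  (forall x, (x <= U)%MS -> b x x = 0) /\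
  (forall x y z, (x <= U)%MS -> (y <= U)%MS -> (z <= U)%MS ->
     b x (b y z) + b y (b z x) + b z (b x y) = 0).

Definition ideal_of (U : 'M[R]_n) (b : vec -> vec -> vec) (S : 'M[R]_n) : Prop :=
  (S <= U)%MS /\ forall x y, (x <= S)%MS -> (y <= U)%MS -> (b x y <= S)%MS.

Definition derived (b : vec -> vec -> vec) (S : 'M[R]_n) : 'M[R]_n :=
  (\sum_(i < n) \sum_(j < n) <<b (row i S) (row j S)>>)%MS.

Definition solvable_sub (b : vec -> vec -> vec) (S : 'M[R]_n) : Prop :=
  exists k : nat, (iter k (derived b) S <= (0 : 'M[R]_n))%MS.

Definition semisimple_on (U : 'M[R]_n) (b : vec -> vec -> vec) : Prop :=
  lie_on U b /\
  forall S, ideal_of U b S -> solvable_sub b S -> (S <= (0 : 'M[R]_n))%MS.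

End Defs.

(* Main.v *)
Require Import Defs.
From HB Require Import structures.
From mathcomp Require Import all_boot all_order all_algebra.
From mathcomp Require Import reals.
From mathcomp.real_closed Require Import complex.
From Stdlib Require Import Classical ClassicalEpsilon.
From mathcomp Require Import zify ring.
Set Implicit Arguments. Unset Strict Implicit. Unset Printing Implicit Defensive.
Import Order.TTheory GRing.Theory Num.Theory.
Local Open Scope ring_scope.


Section Generic.
Variables (R : realType) (n : nat).
Local Notation vec := 'rV[R]_n.
Implicit Types (x y z u v w : vec).

Section Bracket.
Variable b : vec -> vec -> vec.
Hypothesis Hb : is_lie_bracket b.

Lemma bl0 y : b 0 y = 0.
Proof.
case: Hb => Hl _; have := Hl 1 0 0 y; rewrite !scale1r addr0 => H.
by apply: (addrI (b 0 y)); rewrite addr0 -H.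
Qed.
Lemma br0 x : b x 0 = 0.
Proof.
case: Hb => _ [Hr _]; have := Hr 1 x 0 0; rewrite !scale1r addr0 => H.
by apply: (addrI (b x 0)); rewrite addr0 -H.
Qed.
Lemma blD x y z : b (x + y) z = b x z + b y z.
Proof. by case: Hb => Hl _; have := Hl 1 x y z; rewrite !scale1r. Qed.
Lemma brD x y z : b x (y + z) = b x y + b x z.
Proof. by case: Hb => _ [Hr _]; have := Hr 1 x y z; rewrite !scale1r. Qed.
Lemma blZ a x z : b (a *: x) z = a *: b x z.
Proof. by case: Hb => Hl _; have := Hl a x 0 z; rewrite !addr0 bl0 addr0. Qed.
Lemma brZ a x z : b x (a *: z) = a *: b x z.
Proof. by case: Hb => _ [Hr _]; have := Hr a x z 0; rewrite !addr0 br0 addr0. Qed.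
Lemma blN x z : b (- x) z = - b x z.
Proof. by rewrite -scaleN1r blZ scaleN1r. Qed.
Lemma brN x z : b x (- z) = - b x z.
Proof. by rewrite -scaleN1r brZ scaleN1r. Qed.
Lemma blB x y z : b (x - y) z = b x z - b y z.
Proof. by rewrite blD blN. Qed.
Lemma brB x y z : b x (y - z) = b x y - b x z.
Proof. by rewrite brD brN. Qed.
Lemma bxx x : b x x = 0.
Proof. by case: Hb => _ [_ []]. Qed.
Lemma bskew x y : b x y = - b y x.
Proof.
have := bxx (x + y); rewrite blD !brD !bxx add0r addr0 => /eqP.
by rewrite addr_eq0 => /eqP.
Qed.
Lemma bjac x y z : b x (b y z) + b y (b z x) + b z (b x y) = 0.
Proof. by case: Hb => _ [_ [_]]. Qed.
Lemma bsuml (I : Type) (s : seq I) (P : pred I) (F : I -> vec) z :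
  b (\sum_(k <- s | P k) F k) z = \sum_(k <- s | P k) b (F k) z.
Proof. exact: (big_morph (fun x => b x z) (fun x y => blD x y z) (bl0 z)). Qed.
Lemma bsumr (I : Type) (s : seq I) (P : pred I) (F : I -> vec) z :
  b z (\sum_(k <- s | P k) F k) = \sum_(k <- s | P k) b z (F k).
Proof. exact: (big_morph (fun x => b z x) (fun x y => brD z x y) (br0 z)). Qed.
End Bracket.

Lemma dotC u v : dot u v = dot v u.
Proof. by rewrite /dot; apply: eq_bigr => k _; rewrite mulrC. Qed.
Lemma dotDl u v w : dot (u + v) w = dot u w + dot v w.
Proof. by rewrite /dot -big_split; apply: eq_bigr => k _; rewrite mxE mulrDl. Qed.
Lemma dotZl a u w : dot (a *: u) w = a * dot u w.
Proof. by rewrite /dot mulr_sumr; apply: eq_bigr => k _; rewrite mxE mulrA. Qed.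
Lemma dot0l w : dot 0 w = 0.
Proof. by rewrite /dot big1 // => k _; rewrite mxE mul0r. Qed.
Lemma dotNl u w : dot (- u) w = - dot u w.
Proof. by rewrite -scaleN1r dotZl mulN1r. Qed.
Lemma dotBl u v w : dot (u - v) w = dot u w - dot v w.
Proof. by rewrite dotDl dotNl. Qed.
Lemma dotDr u v w : dot w (u + v) = dot w u + dot w v.
Proof. by rewrite dotC dotDl !(dotC w). Qed.
Lemma dotZr a u w : dot w (a *: u) = a * dot w u.
Proof. by rewrite dotC dotZl dotC. Qed.
Lemma dot0r w : dot w 0 = 0.
Proof. by rewrite dotC dot0l. Qed.
Lemma dotNr u w : dot w (- u) = - dot w u.
Proof. by rewrite dotC dotNl dotC. Qed.
Lemma dotBr u v w : dot w (u - v) = dot w u - dot w v.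
Proof. by rewrite dotDr dotNr. Qed.
Lemma dot_suml (I : Type) (s : seq I) (P : pred I) (F : I -> vec) z :
  dot (\sum_(k <- s | P k) F k) z = \sum_(k <- s | P k) dot (F k) z.
Proof. exact: (big_morph (fun x => dot x z) (fun x y => dotDl x y z) (dot0l z)). Qed.
Lemma dot_ge0 u : 0 <= dot u u.
Proof. by rewrite /dot sumr_ge0 // => k _; rewrite -expr2 sqr_ge0. Qed.
Lemma dot_eq0 u : dot u u = 0 -> u = 0.
Proof.
move=> /eqP; rewrite /dot psumr_eq0 => [/allP H|k _]; last by rewrite -expr2 sqr_ge0.
apply/rowP => k; rewrite mxE; have := H k (mem_index_enum k).
by rewrite -expr2 sqrf_eq0 => /eqP.
Qed.

Lemma rowspan_ind m (M : 'M[R]_(m, n)) (P : vec -> Prop) :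
  P 0 -> (forall a x y, P x -> P y -> P (a *: x + y)) ->
  (forall k, P (row k M)) -> forall x, (x <= M)%MS -> P x.
Proof.
move=> P0 Pl Pr x /submxP [c ->]; rewrite mulmx_sum_row.
apply: (big_ind P) => //; last by move=> k _; rewrite -[_ *: _]addr0; apply: (Pl).
by move=> u v Pu Pv; rewrite -[u]scale1r; apply: (Pl).
Qed.

Lemma subspace_exists (P : vec -> Prop) :
  P 0 -> (forall a x y, P x -> P y -> P (a *: x + y)) ->
  exists S : 'M[R]_n, forall x, (x <= S)%MS <-> P x.
Proof.
move=> P0 Pl.
have Pc : forall (A : 'M[R]_n), (forall k, P (row k A)) -> forall x, (x <= A)%MS -> P x.
  by move=> A HA; apply: rowspan_ind.
suff: forall d (A : 'M[R]_n), (n - \rank A <= d)%N -> (forall k, P (row k A)) ->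
  exists S : 'M[R]_n, forall x, (x <= S)%MS <-> P x.
  by move=> /(_ n 0); apply => // [|k]; [rewrite leq_subr | rewrite row0].
elim=> [|d IH] A hd HA.
  exists A => x; split; first exact: Pc.
  move=> Px; have: \rank A = n by apply/eqP; rewrite eqn_leq rank_leq_col -subn_eq0 -leqn0.
  by move=> rA; rewrite (submx_trans (submx1 _)) // sub1mx /row_full rA.
have [Hall|] := classic (forall x, P x -> (x <= A)%MS).
  by exists A => x; split; [apply: Pc | apply: Hall].
move=> /not_all_ex_not [x Hx]; have [Px nxA] := imply_to_and _ _ Hx.
pose B : 'M[R]_n := <<(A + x)%MS>>%MS.
apply: (IH B).
  have hlt : (\rank A < \rank B)%N.
    apply: rank_ltmx; rewrite ltmxE /B genmxE addsmxSl /=.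
    apply/negP => H; apply: nxA; apply: submx_trans H; by rewrite genmxE addsmxSr.
  have : (\rank B <= n)%N by rewrite rank_leq_col.
  move: hd hlt; lia.
move=> k; have : (row k B <= A + x)%MS by rewrite -(genmxE (A + x)%MS) row_sub.
move=> /sub_addsmxP [[u1 u2] /= ->].
rewrite -[u2 *m x]addr0 -[u1 *m A]scale1r; apply: (Pl).
  exact: (Pc A HA _ (submxMl _ _)).
have -> : u2 *m x = u2 0 0 *: x.
  by rewrite {1}[u2]mx11_scalar mul_scalar_mx.
by apply: (Pl).
Qed.

End Generic.


Section Ortho.
Variables (R : realType) (n : nat).
Local Notation vec := 'rV[R]_n.
Implicit Types (x y z u v w : vec) (U V : 'M[R]_n).

Definition orthm U : 'M[R]_n := kermx U^T.

Lemma mulmx_tr_dot x U k : (x *m U^T) 0 k = dot x (row k U).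
Proof. by rewrite mxE /dot; apply: eq_bigr => j _; rewrite !mxE. Qed.

Lemma orthmP U x : (x <= orthm U)%MS <-> (forall y, (y <= U)%MS -> dot x y = 0).
Proof.
split.
  move=> /sub_kermxP H; apply: rowspan_ind.
  - exact: dot0r.
  - by move=> a y z Hy Hz; rewrite dotDr dotZr Hy Hz mulr0 addr0.
  - by move=> k; rewrite -mulmx_tr_dot H mxE.
move=> H; apply/sub_kermxP; apply/rowP => k.
by rewrite mulmx_tr_dot mxE H // row_sub.
Qed.

Lemma orthm_cap U x : (x <= U)%MS -> (x <= orthm U)%MS -> x = 0.
Proof. by move=> xU /orthmP /(_ x xU) /dot_eq0. Qed.

Lemma cap_orthm U : (U :&: orthm U)%MS = 0.
Proof.
apply/eqP; rewrite -submx0; apply/row_subP => k.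
rewrite (@orthm_cap U (row k (U :&: orthm U)%MS)) ?sub0mx //.
  exact: submx_trans (row_sub k _) (capmxSl _ _).
exact: submx_trans (row_sub k _) (capmxSr _ _).
Qed.

Lemma orthm_full U : (1%:M <= U + orthm U)%MS.
Proof.
rewrite sub1mx /row_full mxrank_disjoint_sum ?cap_orthm //.
rewrite /orthm mxrank_ker mxrank_tr.
have := rank_leq_col U; move=> h; apply/eqP; lia.
Qed.

Lemma orthm_decomp U x : exists y z, [/\ x = y + z, (y <= U)%MS & (z <= orthm U)%MS].
Proof.
have /sub_addsmxP [[u1 u2] /= ->] : (x <= U + orthm U)%MS.
  exact: submx_trans (submx1 x) (orthm_full U).
by exists (u1 *m U), (u2 *m orthm U); split; rewrite ?submxMl.
Qed.

Definition oproj U := proj_mx U (orthm U).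

Lemma oproj_sub U x : (x *m oproj U <= U)%MS.
Proof. exact: proj_mx_sub. Qed.
Lemma oproj_id U x : (x <= U)%MS -> x *m oproj U = x.
Proof. by move=> h; rewrite proj_mx_id // cap_orthm. Qed.
Lemma oproj_0 U x : (x <= orthm U)%MS -> x *m oproj U = 0.
Proof. by move=> h; rewrite proj_mx_0 // cap_orthm. Qed.
Lemma oproj_compl U x : (x - x *m oproj U <= orthm U)%MS.
Proof. apply: proj_mx_compl_sub; exact: submx_trans (submx1 x) (orthm_full U). Qed.
Lemma dot_oproj U x y : (y <= U)%MS -> dot (x *m oproj U) y = dot x y.
Proof.
move=> yU; have /orthmP /(_ y yU) := oproj_compl U x.
by rewrite dotBl => /eqP; rewrite subr_eq0 => /eqP ->.
Qed.
Lemma orthm_sym U V : (forall x y, (x <= U)%MS -> (y <= V)%MS -> dot x y = 0) ->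
  (U <= orthm V)%MS.
Proof. by move=> H; apply/row_subP => k; apply/orthmP => y yV; apply: H; rewrite ?row_sub. Qed.

End Ortho.


Section Eigen.
Variables (R : realType) (n : nat).
Local Notation vec := 'rV[R]_n.
Local Notation C := (complex R).
Local Notation Re := (@mathcomp.real_closed.complex.Re R).
Local Notation Im := (@mathcomp.real_closed.complex.Im R).

Lemma ReM (z w : C) : Re (z * w) = Re z * Re w - Im z * Im w.
Proof. by case: z => a b; case: w => c d; reflexivity. Qed.
Lemma ImM (z w : C) : Im (z * w) = Re z * Im w + Im z * Re w.
Proof. by case: z => a b; case: w => c d; reflexivity. Qed.
Lemma ReD (z w : C) : Re (z + w) = Re z + Re w.
Proof. by case: z => a b; case: w => c d; reflexivity. Qed.
Lemma ImD (z w : C) : Im (z + w) = Im z + Im w.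
Proof. by case: z => a b; case: w => c d; reflexivity. Qed.
Lemma Re0 : Re (0 : C) = 0. Proof. by []. Qed.
Lemma Im0 : Im (0 : C) = 0. Proof. by []. Qed.

Lemma sym_eigen (X V : 'M[R]_n) :
  (V *m X <= V)%MS ->
  (forall u w, (u <= V)%MS -> (w <= V)%MS -> dot (u *m X) w = dot u (w *m X)) ->
  V != 0 -> exists a (v : vec), [/\ (v <= V)%MS, v != 0 & v *m X = a *: v].
Proof.
move=> VX Hsym V0.
pose B := row_base V.
have BX : (B *m X <= B)%MS.
  rewrite (eq_row_base V); apply: submx_trans VX; apply: submxMr.
  by rewrite -(eq_row_base V) submx_refl.
pose F := B *m X *m pinvmx B.
have FB : F *m B = B *m X by rewrite /F mulmxKpV.
have k0 : (0 < \rank V)%N by rewrite lt0n mxrank_eq0.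
pose FC := map_mx (real_complex R) F.
have [lam /eigenvalueP [v vF v0]] := Theorem7' FC k0.
pose cr := map_mx Re v; pose ci := map_mx Im v.
have Resum : forall (I : Type) (s : seq I) (f : I -> C),
    Re (\sum_(i <- s) f i) = \sum_(i <- s) Re (f i).
  by move=> I s f; apply: (big_morph _ ReD Re0).
have Imsum : forall (I : Type) (s : seq I) (f : I -> C),
    Im (\sum_(i <- s) f i) = \sum_(i <- s) Im (f i).
  by move=> I s f; apply: (big_morph _ ImD Im0).
have crF : cr *m F = Re lam *: cr - Im lam *: ci.
  apply/rowP => j; rewrite !mxE.
  transitivity (Re ((v *m FC) 0 j)).
    rewrite mxE Resum; apply: eq_bigr => l _; rewrite !mxE ReM /=; ring.
  by rewrite vF !mxE ReM.
have ciF : ci *m F = Im lam *: cr + Re lam *: ci.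
  apply/rowP => j; rewrite !mxE.
  transitivity (Im ((v *m FC) 0 j)).
    rewrite mxE Imsum; apply: eq_bigr => l _; rewrite !mxE ImM /=; ring.
  by rewrite vF !mxE ImM; ring.
pose u := cr *m B; pose w := ci *m B.
have uV : (u <= V)%MS by rewrite -(eq_row_base V) submxMl.
have wV : (w <= V)%MS by rewrite -(eq_row_base V) submxMl.
have uX : u *m X = Re lam *: u - Im lam *: w.
  by rewrite /u -mulmxA -FB mulmxA crF mulmxBl -!scalemxAl.
have wX : w *m X = Im lam *: u + Re lam *: w.
  by rewrite /w -mulmxA -FB mulmxA ciF mulmxDl -!scalemxAl.
have := Hsym u w uV wV; rewrite uX wX dotBl dotDr !dotZl !dotZr.
move=> /eqP; rewrite -subr_eq0.
have -> : Re lam * dot u w - Im lam * dot w w - (Im lam * dot u u + Re lam * dot u w)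
   = - (Im lam * (dot u u + dot w w)) by ring.
rewrite oppr_eq0 mulf_eq0 => /orP [/eqP Hb|].
  have [u0|u0] := eqVneq u 0.
    have w0 : w != 0.
      apply/negP => /eqP w0; apply: (negP v0).
      have : cr == 0 by rewrite -(mulmx_free_eq0 _ (row_base_free V)) -/u u0.
      have : ci == 0 by rewrite -(mulmx_free_eq0 _ (row_base_free V)) -/w w0.
      move=> /eqP /rowP hi /eqP /rowP hr; apply/eqP/rowP => j.
      move: (hi j) (hr j); rewrite !mxE; case: (v 0 j) => a b /= -> ->; by [].
    by exists (Re lam), w; split => //; rewrite wX Hb scale0r add0r.
  by exists (Re lam), u; split => //; rewrite uX Hb scale0r subr0.
rewrite paddr_eq0 ?dot_ge0 // => /andP [/eqP /dot_eq0 u0 /eqP /dot_eq0 w0].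
exfalso; apply: (negP v0).
have : cr == 0 by rewrite -(mulmx_free_eq0 _ (row_base_free V)) -/u u0.
have : ci == 0 by rewrite -(mulmx_free_eq0 _ (row_base_free V)) -/w w0.
move=> /eqP /rowP hi /eqP /rowP hr; apply/eqP/rowP => j.
move: (hi j) (hr j); rewrite !mxE; case: (v 0 j) => a b /= -> ->; by [].
Qed.

End Eigen.


Lemma colsolve (F : fieldType) m p q (A : 'M[F]_(m, p)) (B : 'M[F]_(m, q)) :
  (forall c : 'rV_m, c *m A = 0 -> c *m B = 0) -> exists X, A *m X = B.
Proof.
move=> H; pose K := (cokermx A^T)^T.
have KA : K *m A = 0 by rewrite /K -[A in _ *m A]trmxK -trmx_mul mulmx_coker trmx0.
have KB : K *m B = 0.
  apply/row_matrixP => k; rewrite row_mul row0; apply: H.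
  by rewrite -row_mul KA row0.
have sub : (B^T <= A^T)%MS by rewrite submxE -[cokermx _]trmxK -trmx_mul KB trmx0.
move: (mulmxKpV sub); move: (pinvmx A^T) => P e0.
have e := congr1 trmx e0; rewrite !trmx_mul !trmxK in e.
by exists (P^T *m B).
Qed.

Section Mb.
Variables (R : realType) (n : nat).
Local Notation vec := 'rV[R]_n.
Local Notation T := (prod 'I_n 'I_n).
Definition Mb (b : vec -> vec -> vec) (V : 'M[R]_n) : 'M[R]_(#|{: T}|, n) :=
  \matrix_(k, l) (b (row (enum_val k).1 V) (row (enum_val k).2 V)) 0 l.

Lemma row_Mb b V k : row k (Mb b V) = b (row (enum_val k).1 V) (row (enum_val k).2 V).
Proof. by apply/rowP => l; rewrite !mxE. Qed.

Variable b : vec -> vec -> vec.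
Hypothesis Hb : is_lie_bracket b.

Lemma Mb_in V x y : (x <= V)%MS -> (y <= V)%MS -> (b x y <= Mb b V)%MS.
Proof.
move=> xV; move: x xV y; apply: rowspan_ind.
- by move=> y _; rewrite (bl0 Hb) sub0mx.
- move=> a x1 x2 H1 H2 y yV; rewrite (blD Hb) (blZ Hb).
  by rewrite addmx_sub ?scalemx_sub ?H1 ?H2.
move=> a; apply: rowspan_ind.
- by rewrite (br0 Hb) sub0mx.
- move=> c y1 y2 H1 H2; rewrite (brD Hb) (brZ Hb).
  by rewrite addmx_sub ?scalemx_sub.
move=> c; have -> : b (row a V) (row c V) = row (enum_rank (a, c)) (Mb b V).
  by rewrite row_Mb enum_rankK.
exact: row_sub.
Qed.

Lemma Mb_sub V (S : 'M[R]_n) : (forall x y, (x <= V)%MS -> (y <= V)%MS -> (b x y <= S)%MS) ->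
  (Mb b V <= S)%MS.
Proof. by move=> H; apply/row_subP => k; rewrite row_Mb; apply: H; apply: row_sub. Qed.

Lemma Mb_expand V (c : 'rV_#|{: T}|) :
  c *m Mb b V = \sum_k c 0 k *: b (row (enum_val k).1 V) (row (enum_val k).2 V).
Proof. by rewrite mulmx_sum_row; apply: eq_bigr => k _; rewrite row_Mb. Qed.

End Mb.


Section Main.
Variables (R : realType) (n r : nat).
Local Notation vec := 'rV[R]_n.
Variable br : 'I_r -> vec -> vec -> vec.
Hypothesis Hlie : forall i, is_lie_bracket (br i).
Hypothesis Hmet : forall i, is_metric (br i).
Hypothesis Hder : forall (i j : 'I_r) (x y z : vec),
     br j x (br i y z) = br i (br j x y) z + br i y (br j x z).
Hypothesis Hcom : forall (i j : 'I_r) (x y z : vec),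
     br j (br i x y) z = br i (br j x y) z.
Implicit Types (x y z u v w : vec) (U V : 'M[R]_n).

Lemma Bl0 i y : br i 0 y = 0. Proof. exact: bl0. Qed.
Lemma Br0 i y : br i y 0 = 0. Proof. exact: br0. Qed.
Lemma BlD i x y z : br i (x + y) z = br i x z + br i y z. Proof. exact: blD. Qed.
Lemma BrD i x y z : br i x (y + z) = br i x y + br i x z. Proof. exact: brD. Qed.
Lemma BlZ i a x z : br i (a *: x) z = a *: br i x z. Proof. exact: blZ. Qed.
Lemma BrZ i a x z : br i x (a *: z) = a *: br i x z. Proof. exact: brZ. Qed.
Lemma BlB i x y z : br i (x - y) z = br i x z - br i y z. Proof. exact: blB. Qed.
Lemma BrB i x y z : br i x (y - z) = br i x y - br i x z. Proof. exact: brB. Qed.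
Lemma Bskew i x y : br i x y = - br i y x. Proof. exact: bskew. Qed.

Lemma skew_adj i x y v : dot (br i x y) v = - dot y (br i x v).
Proof. by rewrite Bskew dotNl Hmet. Qed.

Definition invs V := forall i x y, (y <= V)%MS -> (br i x y <= V)%MS.
Definition irr V := ~ (V <= (0 : 'M[R]_n))%MS /\ invs V /\
  forall U, invs U -> (U <= V)%MS -> (U <= (0 : 'M[R]_n))%MS \/ (V <= U)%MS.

Lemma invs_orthm V : invs V -> invs (orthm V).
Proof.
move=> HV i x y /orthmP yo; apply/orthmP => v vV.
by rewrite skew_adj yo ?oppr0 // HV.
Qed.

Lemma invs_cap U V : invs U -> invs V -> invs (U :&: V)%MS.
Proof. by move=> HU HV i x y; rewrite !sub_capmx => /andP [h1 h2]; rewrite HU ?HV. Qed.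

Lemma self_orth U V x : (forall a b, (a <= U)%MS -> (b <= V)%MS -> dot a b = 0) ->
  (x <= U)%MS -> (x <= V)%MS -> x = 0.
Proof. by move=> H xU xV; apply: dot_eq0; apply: H. Qed.

Lemma cross0 U V i x y : invs U -> invs V ->
  (forall a b, (a <= U)%MS -> (b <= V)%MS -> dot a b = 0) ->
  (x <= U)%MS -> (y <= V)%MS -> br i x y = 0.
Proof.
move=> HU HV Ho xU yV; apply: (self_orth Ho); last exact: HV.
by rewrite Bskew eqmx_opp HU.
Qed.

Lemma exists_irr U : invs U -> ~ (U <= (0 : 'M[R]_n))%MS -> exists V, irr V /\ (V <= U)%MS.
Proof.
suff: forall k U, (\rank U < k)%N -> invs U -> ~ (U <= (0 : 'M[R]_n))%MS ->
    exists V, irr V /\ (V <= U)%MS by apply; apply: ltnSn.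
elim=> [//|k IH] {}U hk HU U0.
have [Hirr|Hn] := classic (irr U); first by exists U; split => //; apply: submx_refl.
have : ~ (forall U', invs U' -> (U' <= U)%MS -> (U' <= (0 : 'M[R]_n))%MS \/ (U <= U')%MS).
  by move=> H; apply: Hn; split => //.
move=> /not_all_ex_not [U' H1]; have [HU' H2] := imply_to_and _ _ H1.
have [sU H3] := imply_to_and _ _ H2; have [n0 nU] := not_or_and _ _ H3.
have hr : (\rank U' < k)%N.
  rewrite -ltnS (leq_trans _ hk) // ltnS; apply: rank_ltmx.
  by rewrite ltmxE sU /=; apply/negP.
have [V [Vi VU']] := IH U' hr HU' n0.
by exists V; split => //; apply: submx_trans VU' sU.
Qed.

Lemma decomp U : invs U -> exists m (Vs : 'I_m -> 'M[R]_n),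
  [/\ (U <= \sum_k Vs k)%MS, (\sum_k Vs k <= U)%MS, (forall k, irr (Vs k)) &
      (forall k l, k != l -> forall x y, (x <= Vs k)%MS -> (y <= Vs l)%MS -> dot x y = 0)].
Proof.
suff: forall k U, (\rank U < k)%N -> invs U -> exists m (Vs : 'I_m -> 'M[R]_n),
  [/\ (U <= \sum_k Vs k)%MS, (\sum_k Vs k <= U)%MS, (forall k, irr (Vs k)) &
      (forall k l, k != l -> forall x y, (x <= Vs k)%MS -> (y <= Vs l)%MS -> dot x y = 0)].
  by apply; apply: ltnSn.
elim=> [//|k IH] {}U hk HU.
have [U0|U0] := classic (U <= (0 : 'M[R]_n))%MS.
  exists 0, (fun _ => 0); split; [by rewrite big_ord0 | by rewrite big_ord0 sub0mx | by case | by case].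
have [V [Vi VU]] := exists_irr HU U0; have [V0 [HV _]] := Vi.
pose U' := (U :&: orthm V)%MS.
have HU' : invs U' by apply: invs_cap => //; apply: invs_orthm.
have U'o : (U' <= orthm V)%MS by apply: capmxSr.
have hr : (\rank U' < k)%N.
  rewrite -ltnS (leq_trans _ hk) // ltnS; apply: rank_ltmx.
  rewrite ltmxE capmxSl /=; apply/negP => UU'; apply: V0.
  apply/row_subP => j; rewrite (@orthm_cap _ _ V (row j V)) ?sub0mx ?row_sub //.
  exact: submx_trans (row_sub j V) (submx_trans VU (submx_trans UU' U'o)).
have [m [Vs [s1 s2 s3 s4]]] := IH U' hr HU'.
pose Vs' := fun k : 'I_m.+1 => if unlift ord0 k is Some k' then Vs k' else V.
exists m.+1, Vs'; rewrite big_ord_recl /= {1 2}/Vs' unlift_none.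
have eVs : forall k, Vs' (lift ord0 k) = Vs k by move=> k'; rewrite /Vs' liftK.
rewrite (eq_bigr _ (fun k _ => eVs k)).
split.
- apply: submx_trans (addsmxS (submx_refl V) s1).
  have e := @matrix_modl _ _ _ _ _ V (orthm V) U VU.
  rewrite /U' capmxC e sub_capmx submx_refl andbT.
  exact: submx_trans (submx1 U) (orthm_full V).
- by rewrite /Vs' unlift_none addsmx_sub VU (submx_trans s2) ?capmxSl.
- by move=> k'; rewrite /Vs'; case: (unlift ord0 k') => [k''|]; [apply: s3 | exact: Vi].
move=> k1 k2; rewrite /Vs'.
case: unliftP => [k1' ->|->]; case: unliftP => [k2' ->|->].
- by move=> /= ne; apply: s4; apply: contraNneq ne => ->.
- move=> /= _ x y xk yV.
  by move/orthmP: (submx_trans (sumsmx_sup k1' isT xk) (submx_trans s2 U'o)); apply.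
- move=> /= _ x y xV yk; rewrite dotC.
  by move/orthmP: (submx_trans (sumsmx_sup k2' isT yk) (submx_trans s2 U'o)); apply.
- by rewrite eqxx.
Qed.

Section Block.
Variables (V : 'M[R]_n) (i : 'I_r).
Hypothesis Virr : irr V.
Hypothesis Vnz : exists x y, [/\ (x <= V)%MS, (y <= V)%MS & br i x y != 0].

Lemma HVinv : invs V. Proof. by case: Virr => _ []. Qed.

Lemma center0 z : (z <= V)%MS -> (forall y, (y <= V)%MS -> br i z y = 0) -> z = 0.
Proof.
pose P := (fun z => (z <= V)%MS /\ forall y, (y <= V)%MS -> br i z y = 0).
have P0 : P 0 by split; [exact: sub0mx | move=> y _; rewrite Bl0].
have Pl : forall a x y, P x -> P y -> P (a *: x + y).
  move=> a x1 x2 [h1 h2] [h3 h4]; split; first by rewrite addmx_sub ?scalemx_sub.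
  by move=> y yV; rewrite BlD BlZ h2 ?h4 // scaler0 addr0.
have [Z HZ] := subspace_exists P0 Pl.
have ZV : (Z <= V)%MS by apply/row_subP => k; have [] := (HZ (row k Z)).1 (row_sub k Z).
have Zinv : invs Z.
  move=> l x y /HZ [yV yc]; apply/HZ; split; first exact: HVinv.
  move=> y' y'V; have h := Hder i l x y y'.
  rewrite (yc y' y'V) Br0 (yc _ (HVinv _ _ y'V)) addr0 in h.
  by rewrite -h.
case: Virr => V0 [_ Hmin]; case: (Hmin Z Zinv ZV) => [Z0|VZ].
  move=> zV zc; apply: submx0null (submx_trans _ Z0).
  by apply/HZ; split.
exfalso; case: Vnz => x [y [xV yV /eqP]]; apply.
by have [_ ->] := (HZ x).1 (submx_trans xV VZ).
Qed.

Lemma perfect : (V <= Mb (br i) V)%MS.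
Proof.
pose D : 'M[R]_n := <<Mb (br i) V>>%MS.
have DV : (D <= V)%MS.
  by rewrite /D genmxE; apply: Mb_sub => // x y _ yV; apply: HVinv.
apply/row_subP => k; set z := row k V.
have zV : (z <= V)%MS by apply: row_sub.
have [d [e [ze dD eo]]] := orthm_decomp D z.
have eV : (e <= V)%MS.
  have -> : e = z - d by rewrite ze addrC addKr.
  by rewrite addmx_sub ?eqmx_opp // (submx_trans dD DV).
suff e0 : e = 0 by rewrite ze e0 addr0 -(genmxE (Mb (br i) V)).
apply: center0 => // y yV.
rewrite Bskew; apply/eqP; rewrite oppr_eq0; apply/eqP.
have wV : (br i y e <= V)%MS by apply: HVinv.
apply: dot_eq0; move: wV; set w := br i y e => wV.
rewrite {1}/w -Hmet dotC; move/orthmP: eo; apply.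
by rewrite /D genmxE; apply: Mb_in.
Qed.

Lemma swapMb j l (c : 'rV_#|{: prod 'I_n 'I_n}|) z :
  br j (c *m Mb (br l) V) z = br l (c *m Mb (br j) V) z.
Proof.
rewrite !Mb_expand !bsuml //; apply: eq_bigr => k _.
by rewrite !BlZ Hcom.
Qed.

Lemma block_prop j : exists kap : R, forall x y, (x <= V)%MS -> (y <= V)%MS ->
  br j x y = kap *: br i x y.
Proof.
pose Mi := Mb (br i) V; pose Mj := Mb (br j) V.
have MjV : (Mj <= V)%MS by apply: Mb_sub => // x y _ yV; apply: HVinv.
have wd : forall c : 'rV_#|{: prod 'I_n 'I_n}|, c *m Mi = 0 -> c *m Mj = 0.
  move=> cc h; apply: (@center0 (cc *m Mj)); first exact: submx_trans (submxMl _ _) MjV.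
  by move=> y yV; rewrite swapMb h Bl0.
have [X MX] := colsolve wd.
have X1 : forall x y, (x <= V)%MS -> (y <= V)%MS -> br i x y *m X = br j x y.
  move=> x y xV; move: x xV y; apply: rowspan_ind.
  - by move=> y _; rewrite !Bl0 mul0mx.
  - move=> a x1 x2 H1 H2 y yV; rewrite !BlD !BlZ mulmxDl -scalemxAl H1 ?H2 //.
  move=> a; apply: rowspan_ind.
  - by rewrite !Br0 mul0mx.
  - by move=> c y1 y2 H1 H2; rewrite !BrD !BrZ mulmxDl -scalemxAl H1 H2.
  move=> c; have := congr1 (row (enum_rank (a, c))) MX.
  by rewrite row_mul !row_Mb enum_rankK.
have Vsub : forall u, (u <= V)%MS -> exists c, u = c *m Mi.
  by move=> u uV; apply/submxP; apply: submx_trans uV perfect.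
have X2 : forall u z, (u <= V)%MS -> br i (u *m X) z = br j u z.
  by move=> u z /Vsub [c ->]; rewrite -mulmxA MX swapMb.
have XV : forall u, (u <= V)%MS -> (u *m X <= V)%MS.
  move=> u /Vsub [c ->]; rewrite -mulmxA MX.
  exact: submx_trans (submxMl _ _) MjV.
have X4 : forall y u, (y <= V)%MS -> (u <= V)%MS -> br i y u *m X = br i y (u *m X).
  by move=> y u yV uV; rewrite X1 // [br i y _]Bskew X2 // -Bskew.
have X5 : forall u w, (u <= V)%MS -> (w <= V)%MS -> dot (u *m X) w = dot u (w *m X).
  move=> u w /Vsub [c ->] wV; rewrite -mulmxA MX !Mb_expand //.
  rewrite !dot_suml; apply: eq_bigr => k _.
  by rewrite !dotZl Hmet -X1 ?row_sub // X4 ?row_sub // -Hmet.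
have VX : (V *m X <= V)%MS.
  by apply/row_subP => k; rewrite row_mul XV ?row_sub.
have V0 : V != 0.
  by apply/negP => /eqP V0; case: Virr => H _; apply: H; rewrite V0 submx_refl.
have [kap [v [vV v0 vX]]] := sym_eigen VX X5 V0.
pose P := (fun w => (w <= V)%MS /\ w *m X = kap *: w).
have P0 : P 0 by split; [exact: sub0mx | rewrite mul0mx scaler0].
have Pl : forall a x y, P x -> P y -> P (a *: x + y).
  move=> a x1 x2 [h1 h2] [h3 h4]; split; first by rewrite addmx_sub ?scalemx_sub.
  by rewrite mulmxDl -scalemxAl h2 h4 scalerA mulrC -scalerA scalerDr.
have [E HE] := subspace_exists P0 Pl.
have EV : (E <= V)%MS by apply/row_subP => k; have [] := (HE (row k E)).1 (row_sub k E).
have Einv : invs E.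
  move=> l x w /HE [wV wX]; apply/HE; split; first exact: HVinv.
  have [x1 [x2 [-> x1V x2o]]] := orthm_decomp V x.
  have c0 : br l x2 w = 0.
    apply: (@cross0 (orthm V) V l x2 w (invs_orthm HVinv) HVinv _ x2o wV).
    by move=> a b /orthmP ao bV; apply: ao.
  rewrite BlD c0 addr0; have [c ->] := Vsub x1 x1V.
  rewrite -swapMb X4 ?wX ?BrZ //.
  exact: submx_trans (submxMl _ _) (@Mb_sub _ _ (br l) V V (fun a b _ bV => HVinv l a bV)).
case: Virr => _ [_ Hmin]; case: (Hmin E Einv EV) => [E0|VE].
  by exfalso; move/negP: v0; apply; rewrite -submx0 (submx_trans _ E0) //; apply/HE.
exists kap => x y xV yV; rewrite -X1 //.
by have [_ ->] := (HE _).1 (submx_trans (HVinv i x yV) VE).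
Qed.

End Block.

Lemma sum_ind (I : finType) (Q : pred I) (A : I -> 'M[R]_n) (P : vec -> Prop) :
  P 0 -> (forall x y, P x -> P y -> P (x + y)) ->
  (forall k, Q k -> forall x, (x <= A k)%MS -> P x) ->
  forall x, (x <= \sum_(k | Q k) A k)%MS -> P x.
Proof.
move=> P0 PD PA x /sub_sumsmxP [u ->].
by apply: (big_ind P) => // k Qk; apply: (PA k Qk); apply: submxMl.
Qed.

Section Assembly.
Variables (m : nat) (Vs : 'I_m -> 'M[R]_n) (cls : 'I_m -> option 'I_r)
  (kap : 'I_r -> 'I_m -> R).
Hypothesis Vfull : (1%:M <= \sum_k Vs k)%MS.
Hypothesis Virr : forall k, irr (Vs k).
Hypothesis Vorth : forall k l, k != l -> forall x y,
  (x <= Vs k)%MS -> (y <= Vs l)%MS -> dot x y = 0.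
Hypothesis Hcls : forall k, match cls k with
  | Some i => exists x y, [/\ (x <= Vs k)%MS, (y <= Vs k)%MS & br i x y != 0]
  | None => forall i x y, (x <= Vs k)%MS -> (y <= Vs k)%MS -> br i x y = 0 end.
Hypothesis Hkap : forall k j, match cls k with
  | Some i => forall x y, (x <= Vs k)%MS -> (y <= Vs k)%MS -> br j x y = kap j k *: br i x y
  | None => True end.

Definition tagk k : option 'I_m := if cls k is Some _ then Some k else None.
Definition W a : 'M[R]_n := (\sum_(k | tagk k == a) Vs k)%MS.
Definition bk k : vec -> vec -> vec :=
  if cls k is Some i then br i else fun _ _ => 0.
Definition Pk k := oproj (Vs k).
Definition b0 x y := \sum_k bk k (x *m Pk k) (y *m Pk k).
Definition U := (\sum_k W (Some k))%MS.

Lemma HVk k : invs (Vs k). Proof. by case: (Virr k) => _ []. Qed.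

Lemma bk_lie k : is_lie_bracket (bk k).
Proof.
rewrite /bk; case: (cls k) => [i|]; first exact: Hlie.
split; first by move=> *; rewrite scaler0 addr0.
split; first by move=> *; rewrite scaler0 addr0.
by split => // *; rewrite !addr0.
Qed.

Lemma bk_met k : is_metric (bk k).
Proof. rewrite /bk; case: (cls k) => [i|]; first exact: Hmet. by move=> *; rewrite dot0l dot0r. Qed.

Lemma bk_inv k x y : (y <= Vs k)%MS -> (bk k x y <= Vs k)%MS.
Proof. rewrite /bk; case: (cls k) => [i|] yV; [exact: HVk | exact: sub0mx]. Qed.

Lemma bk_inv' k x y : (x <= Vs k)%MS -> (bk k x y <= Vs k)%MS.
Proof. by move=> xV; rewrite (bskew (bk_lie k)) eqmx_opp bk_inv. Qed.

Lemma Pother k l x : k != l -> (x <= Vs k)%MS -> x *m Pk l = 0.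
Proof.
move=> kl xV; apply: oproj_0; apply/orthmP => y yV.
exact: Vorth kl _ _ xV yV.
Qed.

Lemma Pself k x : (x <= Vs k)%MS -> x *m Pk k = x.
Proof. exact: oproj_id. Qed.

Lemma b0_P x y l : b0 x y *m Pk l = bk l (x *m Pk l) (y *m Pk l).
Proof.
rewrite /b0 mulmx_suml (bigD1 l) //= big1 ?addr0.
  by rewrite Pself // bk_inv' // oproj_sub.
move=> k kl; apply: (Pother kl); apply: bk_inv'; exact: oproj_sub.
Qed.

Lemma b0_lie : is_lie_bracket b0.
Proof.
split.
  move=> a x y z; rewrite /b0 scaler_sumr -big_split; apply: eq_bigr => k _ /=.
  by rewrite mulmxDl -scalemxAl (blD (bk_lie k)) (blZ (bk_lie k)).
split.
  move=> a x y z; rewrite /b0 scaler_sumr -big_split; apply: eq_bigr => k _ /=.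
  by rewrite mulmxDl -scalemxAl (brD (bk_lie k)) (brZ (bk_lie k)).
split.
  by move=> x; rewrite /b0 big1 // => k _; rewrite (bxx (bk_lie k)).
move=> x y z; rewrite {1 3 5}/b0 -!big_split big1 // => k _ /=.
by rewrite !b0_P (bjac (bk_lie k)).
Qed.

Lemma dot_sumr (I : Type) (s : seq I) (Q : pred I) (F : I -> vec) z :
  dot z (\sum_(k <- s | Q k) F k) = \sum_(k <- s | Q k) dot z (F k).
Proof. by rewrite dotC dot_suml; apply: eq_bigr => k _; rewrite dotC. Qed.

Lemma b0_met : is_metric b0.
Proof.
move=> x y z; rewrite /b0 dot_suml dot_sumr; apply: eq_bigr => k _.
rewrite /Pk dotC -(dot_oproj (U := Vs k)) ?bk_inv' ?oproj_sub // dotC bk_met.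
by rewrite dot_oproj // bk_inv // oproj_sub.
Qed.

Lemma W_some_sub k : (W (Some k) <= Vs k)%MS.
Proof.
apply/sumsmx_subP => l; rewrite /tagk; case: (cls l) => [i|] // /eqP [->].
exact: submx_refl.
Qed.

Lemma W_some0 k : cls k = None -> (W (Some k) <= (0 : 'M[R]_n))%MS.
Proof.
move=> ck; apply/sumsmx_subP => l; rewrite /tagk.
by case cl: (cls l) => [i|] // /eqP [el]; rewrite el ck in cl.
Qed.

Lemma Vs_W k : (Vs k <= W (tagk k))%MS.
Proof. by apply: (sumsmx_sup k); rewrite ?eqxx ?submx_refl. Qed.

Lemma b0_closed x y : (b0 x y <= U)%MS.
Proof.
rewrite /b0; apply: summx_sub => k _.
have hk : (bk k (x *m Pk k) (y *m Pk k) <= Vs k)%MS by apply: bk_inv; apply: oproj_sub.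
move: hk; rewrite /bk; case ck: (cls k) => [i|] hk; last exact: sub0mx.
apply: submx_trans hk _.
have h : (Vs k <= W (Some k))%MS by have := Vs_W k; rewrite /tagk ck.
apply: submx_trans h _; by apply: (sumsmx_sup k); rewrite ?submx_refl.
Qed.

Lemma b0_left k x y : (x <= Vs k)%MS -> b0 x y = bk k x (y *m Pk k).
Proof.
move=> xV; rewrite /b0 (bigD1 k) //= big1 => [|l lk]; first by rewrite addr0 (Pself xV).
by rewrite (Pother (k := k)) 1?eq_sym // (bl0 (bk_lie l)).
Qed.

Lemma b0_right k x y : (y <= Vs k)%MS -> b0 x y = bk k (x *m Pk k) y.
Proof.
move=> yV; rewrite /b0 (bigD1 k) //= big1 => [|l lk]; first by rewrite addr0 (Pself yV).
by rewrite [y *m _](Pother (k := k)) 1?eq_sym // (br0 (bk_lie l)).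
Qed.

Lemma Vs_U k i : cls k = Some i -> (Vs k <= U)%MS.
Proof.
move=> ck; have h : (Vs k <= W (Some k))%MS by have := Vs_W k; rewrite /tagk ck.
apply: submx_trans h _; by apply: (sumsmx_sup k); rewrite ?submx_refl.
Qed.

Lemma U_sub : (U <= \sum_(l | cls l != None) Vs l)%MS.
Proof.
apply/sumsmx_subP => k _; apply/sumsmx_subP => l; rewrite /tagk.
case cl: (cls l) => [i|] // _.
by apply: (sumsmx_sup l); rewrite ?cl ?submx_refl.
Qed.

Lemma center_U z : (z <= U)%MS -> (forall y, (y <= U)%MS -> b0 z y = 0) -> z = 0.
Proof.
move=> zU zc.
have hk : forall k v, (v <= Vs k)%MS -> dot z v = 0.
  move=> k v vV; case ck: (cls k) => [i|].
    have Hc := Hcls k; rewrite ck in Hc.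
    have zP0 : z *m Pk k = 0.
      apply: (center0 (Virr k) Hc); first exact: oproj_sub.
      move=> y yV; have := zc y (submx_trans yV (Vs_U ck)).
      by rewrite (b0_right _ yV) /bk ck.
    by rewrite -(dot_oproj _ vV) -/(Pk k) zP0 dot0l.
  have zS := submx_trans zU U_sub; clear zc zU; move: z zS; apply: sum_ind.
  - exact: dot0l.
  - by move=> x1 x2 h1 h2; rewrite dotDl h1 h2 addr0.
  move=> l cl x xV; apply: (Vorth _ xV vV).
  by apply: contraNneq cl => ->; rewrite ck.
apply: dot_eq0; apply: (sum_ind (P := fun x => dot z x = 0)) (submx_trans (submx1 z) Vfull).
- exact: dot0r.
- by move=> x1 x2 h1 h2; rewrite dotDr h1 h2 addr0.
by move=> k _ x xV; apply: hk xV.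
Qed.

Lemma der_in S u v : (u <= S)%MS -> (v <= S)%MS -> (b0 u v <= derived b0 S)%MS.
Proof.
move=> uS; move: u uS v; apply: rowspan_ind.
- by move=> v _; rewrite (bl0 b0_lie) sub0mx.
- move=> a x1 x2 H1 H2 v vS; rewrite (blD b0_lie) (blZ b0_lie).
  by rewrite addmx_sub ?scalemx_sub ?H1 ?H2.
move=> a; apply: rowspan_ind.
- by rewrite (br0 b0_lie) sub0mx.
- move=> c y1 y2 H1 H2; rewrite (brD b0_lie) (brZ b0_lie).
  by rewrite addmx_sub ?scalemx_sub.
move=> c; rewrite /derived; apply: (sumsmx_sup a) => //; apply: (sumsmx_sup c) => //.
by rewrite genmxE submx_refl.
Qed.

Lemma der_sub S (T : 'M[R]_n) :
  (forall u v, (u <= S)%MS -> (v <= S)%MS -> (b0 u v <= T)%MS) -> (derived b0 S <= T)%MS.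
Proof.
move=> H; apply/sumsmx_subP => a _; apply/sumsmx_subP => c _.
by rewrite genmxE; apply: H; apply: row_sub.
Qed.

Lemma ideal_perfect S : ideal_of U b0 S -> (S <= derived b0 S)%MS.
Proof.
move=> [SU Sid]; pose D := derived b0 S.
have DS : (D <= S)%MS by apply: der_sub => u v uS vS; apply: Sid => //; apply: submx_trans vS SU.
apply/row_subP => k; set z := row k S.
have zS : (z <= S)%MS by apply: row_sub.
have [d [e [ze dD eo]]] := orthm_decomp D z.
have eS : (e <= S)%MS.
  have -> : e = z - d by rewrite ze addrC addKr.
  by rewrite addmx_sub ?eqmx_opp // (submx_trans dD DS).
suff e0 : e = 0 by rewrite ze e0 addr0.
apply: center_U; first exact: submx_trans eS SU.
move=> y yU; have [y1 [y2 [ye y1S y2o]]] := orthm_decomp S y.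
have y2U : (y2 <= U)%MS.
  have -> : y2 = y - y1 by rewrite ye addrC addKr.
  by rewrite addmx_sub ?eqmx_opp // (submx_trans y1S SU).
have Hs : forall w, (w <= S)%MS -> (forall s, (s <= S)%MS -> dot w s = 0) -> w = 0.
  by move=> w wS H; apply: dot_eq0; apply: H.
rewrite ye (brD b0_lie).
have -> : b0 e y1 = 0.
  apply: Hs; first by apply: Sid => //; apply: submx_trans y1S SU.
  move=> s sS; rewrite b0_met; move/orthmP: eo; apply; exact: der_in.
have -> : b0 e y2 = 0.
  apply: Hs; first exact: Sid.
  move=> s sS; rewrite (bskew b0_lie) dotNl b0_met.
  move/orthmP: y2o => ->; rewrite ?oppr0 //.
  by apply: Sid => //; apply: submx_trans sS SU.
by rewrite addr0.
Qed.


Lemma semisimple_U : semisimple_on U b0.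
Proof.
split.
  split; first by move=> x y _ _; apply: b0_closed.
  have [H1 [H2 [H3 H4]]] := b0_lie.
  split; first by move=> a x y z _ _ _; apply: H1.
  split; first by move=> a x y z _ _ _; apply: H2.
  split; first by move=> x _; apply: H3.
  by move=> x y z _ _ _; apply: H4.
move=> S HS [k Hk].
suff : (S <= iter k (derived b0) S)%MS by move=> h; apply: submx_trans h Hk.
elim: k {Hk} => [|k IH] /=; first exact: submx_refl.
apply: submx_trans (ideal_perfect HS) _.
by apply: der_sub => u v uS vS; apply: der_in; apply: submx_trans IH.
Qed.

Lemma ideal_W k : ideal_of U b0 (W (Some k)).
Proof.
split; first by apply: (sumsmx_sup k); rewrite ?submx_refl.
move=> x y xW yU; case ck: (cls k) => [i|].
  have xV := submx_trans xW (W_some_sub k).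
  rewrite (b0_left _ xV).
  have h : (Vs k <= W (Some k))%MS by have := Vs_W k; rewrite /tagk ck.
  by apply: submx_trans h; apply: bk_inv'.
have -> : x = 0 by apply: submx0null (submx_trans xW (W_some0 ck)).
by rewrite (bl0 b0_lie) sub0mx.
Qed.

Lemma W_full : (\sum_(a : option 'I_m) W a == 1%:M)%MS.
Proof.
apply/andP; split; first exact: submx1.
apply: submx_trans Vfull _; apply/sumsmx_subP => k _.
apply: submx_trans (Vs_W k) _.
by apply: (sumsmx_sup (tagk k)); rewrite ?submx_refl.
Qed.

Lemma W_ind a (P : vec -> Prop) : P 0 -> (forall x y, P x -> P y -> P (x + y)) ->
  (forall k, tagk k = a -> forall x, (x <= Vs k)%MS -> P x) ->
  forall x, (x <= W a)%MS -> P x.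
Proof. by move=> P0 PD H; apply: sum_ind => // k /eqP; apply: H. Qed.

Lemma W_orth a c : a != c -> forall x y, (x <= W a)%MS -> (y <= W c)%MS -> dot x y = 0.
Proof.
move=> ac x y xW; move: x xW y; apply: W_ind.
- by move=> y _; rewrite dot0l.
- by move=> x1 x2 h1 h2 y yW; rewrite dotDl h1 ?h2 ?addr0.
move=> k tk x xV; apply: W_ind.
- exact: dot0r.
- by move=> y1 y2 h1 h2; rewrite dotDr h1 h2 addr0.
move=> l tl z zV; have kl : k != l by apply: contraNneq ac => kl; rewrite -tk -tl kl.
exact: (Vorth kl xV zV).
Qed.

Lemma W_br a c i : a != c -> forall x y, (x <= W a)%MS -> (y <= W c)%MS -> br i x y = 0.
Proof.
move=> ac x y xW; move: x xW y; apply: W_ind.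
- by move=> y _; rewrite Bl0.
- by move=> x1 x2 h1 h2 y yW; rewrite BlD h1 ?h2 ?addr0.
move=> k tk x xV; apply: W_ind.
- exact: Br0.
- by move=> y1 y2 h1 h2; rewrite BrD h1 h2 addr0.
move=> l tl z zV; have kl : k != l by apply: contraNneq ac => kl; rewrite -tk -tl kl.
exact: (@cross0 (Vs k) (Vs l) i x z (@HVk k) (@HVk l) (Vorth kl) xV zV).
Qed.

Lemma W_none i x y : (x <= W None)%MS -> (y <= W None)%MS -> br i x y = 0.
Proof.
move=> xW; move: x xW y; apply: W_ind.
- by move=> y _; rewrite Bl0.
- by move=> x1 x2 h1 h2 y yW; rewrite BlD h1 ?h2 ?addr0.
move=> k tk x xV; apply: W_ind.
- exact: Br0.
- by move=> y1 y2 h1 h2; rewrite BrD h1 h2 addr0.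
move=> l tl z zV; have [e|kl] := eqVneq k l.
  subst l; have := Hcls k; move: tl; rewrite /tagk; case: (cls k) => // _ H.
  by apply: H.
exact: (@cross0 (Vs k) (Vs l) i x z (@HVk k) (@HVk l) (Vorth kl) xV zV).
Qed.

Lemma W_kap i k x y : (x <= W (Some k))%MS -> (y <= W (Some k))%MS ->
  br i x y = kap i k *: b0 x y.
Proof.
move=> xW yW; case ck: (cls k) => [i0|].
  have xV := submx_trans xW (W_some_sub k); have yV := submx_trans yW (W_some_sub k).
  have := Hkap k i; rewrite ck => ->; rewrite // (b0_left _ xV) (Pself yV) /bk ck //.
have -> : x = 0 by apply: submx0null (submx_trans xW (W_some0 ck)).
by rewrite Bl0 (bl0 b0_lie) scaler0.
Qed.

End Assembly.


Definition clsP m (Vs : 'I_m -> 'M[R]_n) (k : 'I_m) (o : option 'I_r) : Prop :=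
  match o with
  | Some i => exists x y, [/\ (x <= Vs k)%MS, (y <= Vs k)%MS & br i x y != 0]
  | None => forall i x y, (x <= Vs k)%MS -> (y <= Vs k)%MS -> br i x y = 0 end.
Definition kapP m (Vs : 'I_m -> 'M[R]_n) (cls : 'I_m -> option 'I_r) (j : 'I_r) (k : 'I_m) (kp : R) : Prop :=
  match cls k with
  | Some i => forall x y, (x <= Vs k)%MS -> (y <= Vs k)%MS -> br j x y = kp *: br i x y
  | None => True end.

Lemma main_exists :
  exists (N : nat) (W : option 'I_N -> 'M[R]_n)
         (b0 : 'rV[R]_n -> 'rV[R]_n -> 'rV[R]_n) (kappa : 'I_r -> 'I_N -> R),
    [/\ (\sum_(a : option 'I_N) W a == 1%:M)%MS,
        (forall a c : option 'I_N, a != c -> forall x y : 'rV[R]_n,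
            (x <= W a)%MS -> (y <= W c)%MS -> dot x y = 0),
        semisimple_on (\sum_(al : 'I_N) W (Some al))%MS b0,
        (forall al : 'I_N, ideal_of (\sum_(be : 'I_N) W (Some be))%MS b0 (W (Some al))) &
        (forall i : 'I_r,
          [/\ (forall x y, (x <= W None)%MS -> (y <= W None)%MS -> br i x y = 0),
              (forall al : 'I_N, forall x y, (x <= W (Some al))%MS -> (y <= W (Some al))%MS ->
                  br i x y = kappa i al *: b0 x y) &
              (forall a c : option 'I_N, a != c -> forall x y,
                  (x <= W a)%MS -> (y <= W c)%MS -> br i x y = 0)])].
Proof.
have H1 : invs 1%:M by move=> i x y _; apply: submx1.
have [m [Vs [s1 _ s3 s4]]] := decomp H1.
have hc : forall k, exists o : option 'I_r, clsP Vs k o.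
  move=> k; case: (classic (exists i x y,
     [/\ (x <= Vs k)%MS, (y <= Vs k)%MS & br i x y != 0])) => [[i Hi]|Hn].
    by exists (Some i).
  exists None => i x y xV yV; apply: NNPP => hne; apply: Hn; exists i, x, y.
  by split => //; apply/eqP.
pose cls k := proj1_sig (constructive_indefinite_description _ (hc k)).
have Hcls : forall k, clsP Vs k (cls k).
  by move=> k; exact: (proj2_sig (constructive_indefinite_description _ (hc k))).
have hk : forall j k, exists kp : R, kapP Vs cls j k kp.
  move=> j k; have := Hcls k; rewrite /kapP /clsP; case: (cls k) => [i Hc|]; last by exists 0.
  exact: block_prop (s3 k) Hc j.
pose kap j k := proj1_sig (constructive_indefinite_description _ (hk j k)).
have Hkap : forall k j, kapP Vs cls j k (kap j k).
  by move=> k j; exact: (proj2_sig (constructive_indefinite_description _ (hk j k))).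
exists m, (W Vs cls), (b0 Vs cls), kap; split.
- exact: W_full.
- exact: W_orth.
- exact: semisimple_U.
- exact: ideal_W.
move=> i; split.
- exact: W_none.
- exact: W_kap.
- by move=> a c; apply: W_br.
Qed.

End Main.

Theorem mainTheorem4 (R : realType) (n r : nat)
  (br : 'I_r -> 'rV[R]_n -> 'rV[R]_n -> 'rV[R]_n)
  (Hlie : forall i, is_lie_bracket (br i))
  (Hmet : forall i, is_metric (br i))
  (Hder : forall (i j : 'I_r) (x y z : 'rV[R]_n),
     br j x (br i y z) = br i (br j x y) z + br i y (br j x z))
  (Hcom : forall (i j : 'I_r) (x y z : 'rV[R]_n),
     br j (br i x y) z = br i (br j x y) z) :
  exists (N : nat) (W : option 'I_N -> 'M[R]_n)
         (b0 : 'rV[R]_n -> 'rV[R]_n -> 'rV[R]_n) (kappa : 'I_r -> 'I_N -> R),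
    [/\ (\sum_(a : option 'I_N) W a == 1%:M)%MS,
        (forall a c : option 'I_N, a != c -> forall x y : 'rV[R]_n,
            (x <= W a)%MS -> (y <= W c)%MS -> dot x y = 0),
        semisimple_on (\sum_(al : 'I_N) W (Some al))%MS b0,
        (forall al : 'I_N, ideal_of (\sum_(be : 'I_N) W (Some be))%MS b0 (W (Some al))) &
        (forall i : 'I_r,
          [/\ (forall x y, (x <= W None)%MS -> (y <= W None)%MS -> br i x y = 0),
              (forall al : 'I_N, forall x y, (x <= W (Some al))%MS -> (y <= W (Some al))%MS ->
                  br i x y = kappa i al *: b0 x y) &
              (forall a c : option 'I_N, a != c -> forall x y,
                  (x <= W a)%MS -> (y <= W c)%MS -> br i x y = 0)])].
Proof. exact: (main_exists Hlie Hmet Hder Hcom). Qed.
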